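(* Let $P=P(G,[\omega])$ be a toric poset and $i,j\in V$. If $I=[i,j]^{\mathrm{tor}}$, then there exists $\omega'\in[\omega]$ such that $I$ equals the interval $[i,j]=\{k\in V: i\le k\le j\}$ of the poset $P(G,\omega')$. The converse fails in general: for $G$ the path $1-2-3$ and $\omega$ the orientation $1\to2\to3$, the interval $[1,3]$ of $P(G,\omega)$ is $\{1,2,3\}$, whereas $[1,3]^{\mathrm{tor}}=\emptyset$ in $P(G,[\omega])$.
   Context: Toric poset setup: $V=[n]$; $\mathrm{Acyc}(G)$ acyclic orientations; $P(G,\omega)$ the poset on $V$ given by the transitive closure of $\omega$; $[\omega]$ the class under the equivalence generated by converting a source into a sink; toric chambers (components of $\mathbb{R}^V/\mathbb{Z}^V$ minus the hyperplanes $\{x_i\equiv x_j\bmod 1\}$, $\{i,j\}\in E$) correspond bijectively to classes $[\omega]$; $P(G,[\omega])$ is identified with its chamber $c(P)$. Toric chain: $C=\{i_1,\dots,i_m\}$ is a toric chain of $P$ if there is a cyclic class $[(i_1,\dots,i_m)]$ such that for every $x\in c(P)$ (coordinates in $[0,1)$) some cyclic shift $(j_1,\dots,j_m)$ has $0\le x_{j_1}<\dots<x_{j_m}<1$; write $P|_C=[(i_1,\dots,i_m)]$. Toric interval: $[i,i]^{\mathrm{tor}}=\{i\}$; for $i\ne j$, $[i,j]^{\mathrm{tor}}=\emptyset$ if $\{i,j\}$ is not a toric chain and otherwise $[i,j]^{\mathrm{tor}}=\{i,j\}\cup\{k: P|_{\{i,j,k\}}=[(i,k,j)]\}$. Ordinary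 interval $[i,j]$ is empty if $i\not\le j$. *)

(* Defs.v *)
From HB Require Import structures.
From mathcomp Require Import all_boot all_order all_algebra.
From Stdlib Require Import Relations.Relation_Operators.
Set Implicit Arguments. Unset Strict Implicit. Unset Printing Implicit Defensive.
Import Order.TTheory GRing.Theory Num.Theory.
Local Open Scope ring_scope.

(* Vertex set V = [n] is modelled by 'I_n (vertex v+1 <-> ordinal v).
   An orientation is a relation o on 'I_n (o a b means edge a -> b). *)

Definition simple_graph n (e : rel 'I_n) : Prop :=
  (forall a b, e a b = e b a) /\ (forall a, ~~ e a a).

(* o is an acyclic orientation of e: every edge is oriented in (at least,
   hence by acyclicity exactly) one direction, only edges are oriented,
   and there is no directed cycle. *)
Definition acyc_orient n (e : rel 'I_n) (o : rel 'I_n) : Prop :=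
  (forall a b, e a b -> o a b || o b a) /\
  (forall a b, o a b -> e a b) /\
  (forall a b, o a b -> ~~ connect o b a).

Definition ple n (o : rel 'I_n) (a b : 'I_n) : bool := connect o a b.

Definition pinterval n (o : rel 'I_n) (i j : 'I_n) : {set 'I_n} :=
  [set k | ple o i k && ple o k j].

Definition is_source n (o : rel 'I_n) (v : 'I_n) : Prop := forall a, ~~ o a v.

Definition flip n (o : rel 'I_n) (v : 'I_n) : rel 'I_n :=
  fun a b => if a == v then false else if b == v then o v a else o a b.

Definition flip_step n (o o' : rel 'I_n) : Prop :=
  exists v, is_source o v /\ o' = flip o v.

Definition toric_equiv n (o o' : rel 'I_n) : Prop :=
  clos_refl_sym_trans (rel 'I_n) (@flip_step n) o o'.

Definition induced_orient (R : realFieldType) n (e : rel 'I_n) (x : 'I_n -> R)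
  : rel 'I_n := fun a b => e a b && (x a < x b).

Definition in_chamber (R : realFieldType) n (e o : rel 'I_n) (x : 'I_n -> R)
  : Prop :=
  (forall a, 0 <= x a < 1) /\
  (forall a b, e a b -> x a != x b) /\
  toric_equiv o (induced_orient e x).

(* the cyclic sequence s witnesses that the set C is a toric chain of
   P(G,[o]) with P|_C = [s] *)
Definition restr_is (R : realFieldType) n (e o : rel 'I_n) (C : {set 'I_n})
  (s : seq 'I_n) : Prop :=
  uniq s /\ [set:: s] = C /\
  forall x : 'I_n -> R, in_chamber e o x ->
    exists k, sorted (fun a b => x a < x b) (rot k s).

Definition toric_chain (R : realFieldType) n (e o : rel 'I_n) (C : {set 'I_n})
  : Prop := exists s, restr_is R e o C s.

Definition restr_eq (R : realFieldType) n (e o : rel 'I_n) (C : {set 'I_n})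
  (t : seq 'I_n) : Prop :=
  exists s, restr_is R e o C s /\ exists k, s = rot k t.

Definition tor_mem (R : realFieldType) n (e o : rel 'I_n) (i j k : 'I_n)
  : Prop :=
  if i == j then k = i
  else toric_chain R e o [set i; j] /\
       (k = i \/ k = j \/ restr_eq R e o [set i; j; k] [:: i; k; j]).

Definition is_tor_interval (R : realFieldType) n (e o : rel 'I_n)
  (i j : 'I_n) (I : {set 'I_n}) : Prop :=
  forall k, k \in I <-> tor_mem R e o i j k.

(* the counterexample: G = path 1 - 2 - 3, omega = 1 -> 2 -> 3
   (vertices 1,2,3 are the ordinals 0,1,2 of 'I_3) *)
Definition path3 : rel 'I_3 :=
  fun a b => ((a : nat) + 1 == b)%N || ((b : nat) + 1 == a)%N.
Definition path3_orient : rel 'I_3 := fun a b => ((a : nat) + 1 == b)%N.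
Definition v1 : 'I_3 := @Ordinal 3 0 isT.
Definition v3 : 'I_3 := @Ordinal 3 2 isT.

(* Main.v *)
Require Import Defs.
From HB Require Import structures.
From mathcomp Require Import all_boot all_order all_algebra.
From mathcomp Require Import zify ring lra.
From Stdlib Require Import Relations.Relation_Operators FunctionalExtensionality Classical.
Set Implicit Arguments. Unset Strict Implicit. Unset Printing Implicit Defensive.
Import Order.TTheory GRing.Theory Num.Theory.

Lemma conn_first n (o : rel 'I_n) a b :
  connect o a b -> a != b -> exists2 c, o a c & connect o c b.
Proof.
move=> /connectP [[|c p] /= Hp -> ]; first by rewrite eqxx.
move=> _; case/andP: Hp => Hac Hp; exists c => //.
by apply/connectP; exists p.
Qed.

Lemma conn_last n (o : rel 'I_n) a b :
  connect o a b -> a != b -> exists2 c, connect o a c & o c b.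
Proof.
move=> /connectP [p]; elim/last_ind: p => [|p c _] /=.
  by move=> _ ->; rewrite eqxx.
rewrite rcons_path last_rcons => /andP [Hp Hc] -> _.
exists (last a p) => //; apply/connectP; by exists p.
Qed.

Definition acyc3 n (o : rel 'I_n) := forall a b, o a b -> ~~ connect o b a.

Lemma acyc_antisym n (o : rel 'I_n) a b :
  acyc3 o -> connect o a b -> connect o b a -> a = b.
Proof.
move=> Ha Hab Hba; apply/eqP; apply/negPn/negP => Hne.
case: (conn_first Hab Hne) => c Hac Hcb.
by move: (Ha _ _ Hac); rewrite (connect_trans Hcb Hba).
Qed.

Lemma src_conn n (o : rel 'I_n) v a : is_source o v -> connect o a v -> a = v.
Proof.
move=> Hs H; apply/eqP; apply/negPn/negP => Hne.
by case: (conn_last H Hne) => c _ Hc; move: (Hs c); rewrite Hc.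
Qed.

Lemma flip_out n (o : rel 'I_n) v b : connect (flip o v) v b -> b = v.
Proof.
move=> H; apply/eqP; apply/negPn/negP => Hne.
have Hne' : v != b by rewrite eq_sym.
by case: (conn_first H Hne') => c; rewrite /flip eqxx.
Qed.

Lemma flip_fwd n (o : rel 'I_n) v a b :
  is_source o v -> connect o a b -> a != v -> connect (flip o v) a b.
Proof.
move=> Hs /connectP [p Hp ->]; elim: p a Hp => [|c p IH] a /=.
  by move=> _ _; apply: connect0.
case/andP=> Hac Hp Hav.
have Hcv : c != v by apply/eqP => E; move: (Hs a); rewrite -E Hac.
apply: (connect_trans (connect1 _) (IH _ Hp Hcv)).
by rewrite /flip (negbTE Hav) (negbTE Hcv).
Qed.

Lemma flip_bwd n (o : rel 'I_n) v a b :
  connect (flip o v) a b -> b != v -> connect o a b.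
Proof.
move=> /connectP [p Hp ->]; elim: p a Hp => [|c p IH] a /=.
  by move=> _ _; apply: connect0.
case/andP=> Hac Hp Hl.
have Hcv : c != v.
  apply/eqP => E; subst c.
  by move: Hp Hl; case: p {IH} => [|d p] /=; [rewrite eqxx | rewrite /flip eqxx].
apply: (connect_trans (connect1 _) (IH _ Hp Hl)).
by move: Hac; rewrite /flip (negbTE Hcv); case: (a == v).
Qed.

Definition good n (e : rel 'I_n) (o : rel 'I_n) := acyc_orient e o.

Lemma good_flip n (e o : rel 'I_n) v :
  simple_graph e -> is_source o v -> good e o -> good e (flip o v).
Proof.
move=> [Hsym Hirr] Hs [H1 [H2 H3]]; split; [|split].
- move=> a b Hab.
  case: (a =P v) => [Eav|Hav]; [subst a|].
    have Hbv : b != v by apply/eqP => E; move: (Hirr v); rewrite -{2}E Hab.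
    rewrite /flip eqxx /= (negbTE Hbv).
    by case/orP: (H1 _ _ Hab) => // Hbv'; move: (Hs b); rewrite Hbv'.
  case: (b =P v) => [Ebv|Hbv]; [subst b|].
    rewrite /flip eqxx (introF eqP Hav) /=.
    by case/orP: (H1 _ _ Hab) => // Hav'; move: (Hs a); rewrite Hav'.
  by rewrite /flip (introF eqP Hav) (introF eqP Hbv); apply: H1.
- move=> a b; rewrite /flip; case: eqP => // Hav; case: eqP => [->|Hbv].
  + by move/H2; rewrite Hsym.
  + by apply: H2.
- move=> a b; rewrite {1}/flip; case: eqP => // Hav; case: eqP => [->|Hbv] Hab.
  + by apply/negP => /flip_out E; apply: Hav.
  + apply/negP => /flip_bwd H; move: (H3 _ _ Hab); rewrite H //.
    by apply/eqP.
Qed.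

Lemma good_unflip n (e o : rel 'I_n) v :
  simple_graph e -> is_source o v -> good e (flip o v) -> good e o.
Proof.
move=> [Hsym Hirr] Hs [H1 [H2 H3]]; split; [|split].
- move=> a b Hab.
  case: (a =P v) => [Eav|Hav]; [subst a|].
    have Hbv : b != v by apply/eqP => E; move: (Hirr v); rewrite -{2}E Hab.
    move: (H1 _ _ Hab); rewrite /flip eqxx /= (negbTE Hbv).
    by move=> ->.
  case: (b =P v) => [Ebv|Hbv]; [subst b|].
    move: (H1 _ _ Hab); rewrite /flip eqxx /= (introF eqP Hav) orbF => ->.
    by rewrite orbT.
  by move: (H1 _ _ Hab); rewrite /flip (introF eqP Hav) (introF eqP Hbv).
- move=> a b Hab.
  case: (b =P v) => [Ebv|Hbv]; first by subst b; move: (Hs a); rewrite Hab.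
  case: (a =P v) => [Eav|Hav].
    subst a; have := H2 b v; rewrite /flip eqxx (introF eqP Hbv) Hab Hsym.
    by apply.
  by apply: H2; rewrite /flip (introF eqP Hav) (introF eqP Hbv).
- move=> a b Hab; apply/negP => Hba.
  case: (b =P v) => [Ebv|Hbv]; first by subst b; move: (Hs a); rewrite Hab.
  case: (a =P v) => [Eav|Hav].
    subst a; have E := src_conn Hs Hba; subst b; by move: (Hs v); rewrite Hab.
  have Hf : flip o v a b by rewrite /flip (introF eqP Hav) (introF eqP Hbv).
  move: (H3 _ _ Hf); rewrite (flip_fwd Hs Hba) //; exact/eqP.
Qed.


Definition cnt n (o : rel 'I_n) (P : pred 'I_n) v :=
  #|[set w | P w && connect o w v]|.

Lemma cnt_le n (o : rel 'I_n) P v : cnt o P v <= n.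
Proof. by apply: leq_trans (max_card _) _; rewrite card_ord. Qed.

Lemma cnt_pos n (o : rel 'I_n) (P : pred 'I_n) v : P v -> 0 < cnt o P v.
Proof. by move=> Hv; apply/card_gt0P; exists v; rewrite inE Hv connect0. Qed.

Lemma cnt_lt n (o : rel 'I_n) (P : pred 'I_n) a b :
  acyc3 o -> connect o a b -> a != b -> P b -> cnt o P a < cnt o P b.
Proof.
move=> Ha Hab Hne Pb; apply: proper_card; apply/properP; split.
  apply/subsetP => w; rewrite !inE => /andP [-> Hw] /=.
  exact: connect_trans Hw Hab.
exists b; first by rewrite inE Pb connect0.
rewrite inE Pb /=; apply/negP => Hba.
by move: Hne; rewrite (acyc_antisym Ha Hab Hba) eqxx.
Qed.

Definition gpot n (o : rel 'I_n) (U : pred 'I_n) v :=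
  if U v then n + cnt o U v else cnt o predT v.

Lemma gpot_incr n (o : rel 'I_n) (U : pred 'I_n) a b :
  acyc3 o -> (forall u v, U u -> connect o u v -> U v) ->
  o a b -> gpot o U a < gpot o U b.
Proof.
move=> Ha HU Hab.
have Hne : a != b by apply/eqP => E; move: (Ha _ _ Hab); rewrite E connect0.
have Cab := connect1 Hab.
rewrite /gpot; case Ua: (U a).
  rewrite (HU _ _ Ua Cab) ltn_add2l; exact: (cnt_lt Ha Cab Hne (HU _ _ Ua Cab)).
case Ub: (U b).
  apply: (leq_trans (n := n.+1)); first by rewrite ltnS cnt_le.
  by rewrite -addn1 leq_add2l; apply: cnt_pos; rewrite Ub.
exact: (cnt_lt (P:=predT) Ha Cab Hne isT).
Qed.

Lemma gpot_bound n (o : rel 'I_n) U v : gpot o U v < (n + n).+1.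
Proof.
rewrite ltnS /gpot; case: (U v); first by rewrite leq_add2l cnt_le.
by apply: leq_trans (cnt_le _ _ _) (leq_addr _ _).
Qed.

Lemma tie_pot n (o : rel 'I_n) a b :
  acyc3 o -> a != b -> ~~ connect o a b -> ~~ connect o b a ->
  exists g : 'I_n -> nat, (forall u v, o u v -> g u < g v) /\
    (forall v, g v < (n + n).+1) /\ g a = g b.
Proof.
move=> Ha Hne Hab Hba.
pose U := [pred v | connect o a v || connect o b v].
have HU : forall u v, U u -> connect o u v -> U v.
  move=> u v; rewrite !inE => /orP [H|H] Huv.
    by rewrite (connect_trans H Huv).
  by rewrite (connect_trans H Huv) orbT.
exists (gpot o U); split; first by move=> u v; apply: gpot_incr.
split; first by move=> v; apply: gpot_bound.
have Ec : forall c d, acyc3 o -> ~~ connect o d c ->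
    (forall w, U w = connect o c w || connect o d w) -> cnt o U c = 1.
  move=> c d Ha' Hdc HUe; rewrite /cnt -(cards1 c); apply: eq_card => w.
  rewrite in_set1 in_set HUe; apply/idP/idP; last first.
    by move/eqP ->; rewrite !connect0.
  case/andP => /orP [Hw|Hw] Hwc.
    by rewrite (acyc_antisym Ha' Hw Hwc).
  by move: Hdc; rewrite (connect_trans Hw Hwc).
rewrite /gpot !inE !connect0 orbT /=.
rewrite (Ec a b) // (Ec b a) //.
by move=> w; rewrite !inE orbC.
Qed.

Lemma ord_pot n (o : rel 'I_n) i j k :
  acyc3 o -> connect o i j -> i != j -> ~~ connect o k j ->
  exists g : 'I_n -> nat, (forall u v, o u v -> g u < g v) /\
    (forall v, g v < (n + n).+1) /\ g i < g j /\ g j < g k.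
Proof.
move=> Ha Hij Hne Hkj.
pose U := [pred v | ~~ connect o v j].
have HU : forall u v, U u -> connect o u v -> U v.
  move=> u v; rewrite !inE => Hu Huv; apply/negP => Hv.
  by move: Hu; rewrite (connect_trans Huv Hv).
exists (gpot o U); split; first by move=> u v; apply: gpot_incr.
split; first by move=> v; apply: gpot_bound.
rewrite /gpot !inE Hij connect0 Hkj /=; split.
  exact: (cnt_lt (P:=predT) Ha Hij Hne isT).
apply: (leq_trans (n:=n.+1)); first by rewrite ltnS cnt_le.
by rewrite -addn1 leq_add2l; apply: cnt_pos.
Qed.

Local Open Scope ring_scope.

Lemma divM_lt (R : realFieldType) (a b M : nat) : (0 < M)%N ->
  (((a%:R / M%:R) : R) < b%:R / M%:R) = (a < b)%N.
Proof. by move=> HM; rewrite ltr_pM2r ?invr_gt0 ?ltr0n // ltr_nat. Qed.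

Lemma pot_chamber (R : realFieldType) n (e w o : rel 'I_n) (g : 'I_n -> nat) M :
  simple_graph e -> good e o -> toric_equiv w o ->
  (forall a b, o a b -> (g a < g b)%N) -> (forall v, (g v < M)%N) ->
  in_chamber e w (fun v => (g v)%:R / (M%:R) : R).
Proof.
move=> [Hsym Hirr] [H1 [H2 H3]] Hw Hg HM.
have Hx : forall a b, o a b -> ((g a)%:R / M%:R : R) < (g b)%:R / M%:R.
  by move=> a b Hab; rewrite divM_lt ?Hg //; apply: leq_ltn_trans (HM a).
split; [|split].
- move=> a; have M0 : (0 < M)%N by apply: leq_ltn_trans (HM a).
  rewrite divr_ge0 ?ler0n //= ltr_pdivrMr ?ltr0n // mul1r ltr_nat; exact: HM.
- move=> a b Hab; case/orP: (H1 _ _ Hab) => H.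
    by rewrite lt_eqF // Hx.
  by rewrite gt_eqF // Hx.
- suff -> : induced_orient e (fun v => (g v)%:R / (M%:R) : R) = o by [].
  apply: functional_extensionality => a; apply: functional_extensionality => b.
  rewrite /induced_orient; case Hab: (o a b).
    by rewrite (H2 _ _ Hab) Hx.
  case Eab: (e a b) => //=.
  case/orP: (H1 _ _ Eab); first by rewrite Hab.
  by move/Hx => H; apply/negbTE; rewrite -leNgt ltW.
Qed.

Lemma no_tie (R : realFieldType) n (e w : rel 'I_n) a b (x : 'I_n -> R) :
  toric_chain R e w [set a; b] -> a != b -> in_chamber e w x -> x a = x b -> False.
Proof.
move=> [s [Hu [Hs Hsort]]] Hne Hx Exab.
case: (Hsort x Hx) => k.
have Hall : forall c, c \in rot k s -> x c = x a.
  move=> c; rewrite mem_rot => Hc.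
  have : c \in [set:: s] by rewrite inE.
  by rewrite Hs !inE => /orP [/eqP E|/eqP E]; subst c.
have Ha : a \in rot k s by rewrite mem_rot -[a \in s](in_set (mem s)) Hs !inE eqxx.
have Hb : b \in rot k s by rewrite mem_rot -[b \in s](in_set (mem s)) Hs !inE eqxx orbT.
case: (rot k s) Hall Ha Hb => [|c [|d t]] //= Hall.
  by rewrite !inE => /eqP Ea /eqP Eb; move: Hne; rewrite Ea Eb eqxx.
move=> _ _ /andP [H _]; move: H; rewrite (Hall c) ?inE ?eqxx // (Hall d) ?inE ?eqxx ?orbT //.
by rewrite ltxx.
Qed.

Lemma cmp_lem (R : realFieldType) n (e w o : rel 'I_n) a b :
  simple_graph e -> good e o -> toric_equiv w o ->
  toric_chain R e w [set a; b] -> a != b -> connect o a b || connect o b a.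
Proof.
move=> He Hg Hw Hc Hne; apply/negPn/negP; rewrite negb_or => /andP [Hab Hba].
have Ha3 : acyc3 o by case: Hg => _ [].
case: (tie_pot Ha3 Hne Hab Hba) => g [Hinc [Hbd Eg]].
apply: (no_tie Hc Hne (pot_chamber R He Hg Hw Hinc Hbd)).
by rewrite /= Eg.
Qed.

Local Close Scope ring_scope.


Definition Compat n (w' o : rel 'I_n) (f : 'I_n -> int) :=
  forall a b, w' a b -> (o a b /\ f a = f b) \/ (o b a /\ f b = (f a + 1)%R).

Definition Inv n (o : rel 'I_n) i j (f : 'I_n -> int) :=
  (connect o i j /\ f j = f i) \/ (connect o j i /\ f j = (f i + 1)%R).

Definition upd n (f : 'I_n -> int) v (d : int) := fun u => if u == v then (f u + d)%R else f u.

Lemma compat_fwd n (e w' o : rel 'I_n) f v :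
  simple_graph e -> good e w' -> is_source o v -> Compat w' o f ->
  Compat w' (flip o v) (upd f v (-1)).
Proof.
move=> [Hsym Hirr] [_ [H2 _]] Hs Hc a b Hab.
have Hne : a != b by apply/eqP => E; move: (Hirr a); rewrite {2}E (H2 _ _ Hab).
rewrite /upd /flip.
case: (a =P v) => [Eav|Hav]; [subst a|].
  have Hbv : (b == v) = false by apply/negbTE; rewrite eq_sym.
  rewrite Hbv ?eqxx.
  case: (Hc _ _ Hab) => [[Hvb E]|[Hbv' _]]; last by move: (Hs b); rewrite Hbv'.
  right; split => //; lia.
case: (b =P v) => [Ebv|Hbv]; [subst b|].
  rewrite ?eqxx ?(introF eqP Hav).
  case: (Hc _ _ Hab) => [[Hav' _]|[Hva E]]; first by move: (Hs a); rewrite Hav'.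
  left; split => //; lia.
exact: Hc.
Qed.

Lemma compat_bwd n (e w' o : rel 'I_n) f v :
  simple_graph e -> good e w' -> is_source o v -> Compat w' (flip o v) f ->
  Compat w' o (upd f v 1).
Proof.
move=> [Hsym Hirr] [_ [H2 _]] Hs Hc a b Hab.
have Hne : a != b by apply/eqP => E; move: (Hirr a); rewrite {2}E (H2 _ _ Hab).
rewrite /upd.
case: (a =P v) => [Eav|Hav]; [subst a|].
  have Hbv : (b == v) = false by apply/negbTE; rewrite eq_sym.
  rewrite Hbv ?eqxx.
  case: (Hc _ _ Hab) => [[Hvb E]|[Hbv' E]]; first by move: Hvb; rewrite /flip eqxx.
  move: Hbv'; rewrite /flip eqxx Hbv => Hbv'.
  left; split => //; lia.
case: (b =P v) => [Ebv|Hbv]; [subst b|].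
  rewrite ?eqxx ?(introF eqP Hav).
  case: (Hc _ _ Hab) => [[Hav' E]|[Hva _]]; last by move: Hva; rewrite /flip eqxx.
  move: Hav'; rewrite /flip eqxx (introF eqP Hav) => Hva.
  right; split => //; lia.
rewrite ?(introF eqP Hav) ?(introF eqP Hbv).
by move: (Hc _ _ Hab); rewrite /flip (introF eqP Hav) (introF eqP Hbv).
Qed.

Definition K (R : realFieldType) n (e w w' : rel 'I_n) i j (o : rel 'I_n) :=
  good e o /\ toric_equiv w o /\ exists f, Compat w' o f /\ Inv o i j f.

Lemma K_fwd (R : realFieldType) n (e w w' : rel 'I_n) i j o v :
  simple_graph e -> good e w' -> toric_chain R e w [set i; j] -> i != j ->
  is_source o v -> K R e w w' i j o -> K R e w w' i j (flip o v).
Proof.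
move=> He Hw' Hch Hij Hs [Hg [Hw [f [Hc Hi]]]].
have Hg2 := good_flip He Hs Hg.
have Hw2 : toric_equiv w (flip o v).
  apply: (rst_trans _ _ _ _ _ Hw); apply: rst_step; by exists v.
split => //; split => //; exists (upd f v (-1)); split; first exact: (compat_fwd He Hw' Hs Hc).
have Hcmp := cmp_lem He Hg2 Hw2 Hch Hij.
have Hji : (j == i) = false by apply/negbTE; rewrite eq_sym.
rewrite /Inv /upd.
case: (i =P v) => [Eiv|Hiv].
  subst v; rewrite /= ?Hji ?eqxx.
  case: Hi => [[Hcij E]|[Hcji _]]; last first.
    by move: Hji; rewrite (src_conn Hs Hcji) eqxx.
  case/orP: Hcmp => [H|H].
    by move: Hji; rewrite (flip_out H) eqxx.
  right; split => //; lia.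
case: (j =P v) => [Ejv|Hjv].
  subst v; rewrite /= ?eqxx ?(introF eqP Hiv).
  case: Hi => [[Hcij _]|[Hcji E]].
    by move: Hij; rewrite (src_conn Hs Hcij) eqxx.
  case/orP: Hcmp => [H|H]; last by move: Hij; rewrite (flip_out H) eqxx.
  left; split => //; lia.
rewrite /= ?(introF eqP Hiv) ?(introF eqP Hjv).
case: Hi => [[H E]|[H E]].
  by left; split => //; apply: flip_fwd => //; apply/eqP.
by right; split => //; apply: flip_fwd => //; apply/eqP.
Qed.

Lemma K_bwd (R : realFieldType) n (e w w' : rel 'I_n) i j o v :
  simple_graph e -> good e w' -> toric_chain R e w [set i; j] -> i != j ->
  is_source o v -> K R e w w' i j (flip o v) -> K R e w w' i j o.
Proof.
move=> He Hw' Hch Hij Hs [Hg [Hw [f [Hc Hi]]]].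
have Hg1 := good_unflip He Hs Hg.
have Hw1 : toric_equiv w o.
  apply: (rst_trans _ _ _ _ _ Hw); apply: rst_sym; apply: rst_step; by exists v.
split => //; split => //; exists (upd f v 1); split; first exact: (compat_bwd He Hw' Hs Hc).
have Hcmp := cmp_lem He Hg1 Hw1 Hch Hij.
have Hji : (j == i) = false by apply/negbTE; rewrite eq_sym.
rewrite /Inv /upd.
case: (i =P v) => [Eiv|Hiv].
  subst v; rewrite /= ?Hji ?eqxx.
  case: Hi => [[Hcij _]|[Hcji E]].
    by move: Hji; rewrite (flip_out Hcij) eqxx.
  case/orP: Hcmp => [H|H]; last by move: Hji; rewrite (src_conn Hs H) eqxx.
  left; split => //; lia.
case: (j =P v) => [Ejv|Hjv].
  subst v; rewrite /= ?eqxx ?(introF eqP Hiv).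
  case: Hi => [[Hcij E]|[Hcji _]]; last by move: Hij; rewrite (flip_out Hcji) eqxx.
  case/orP: Hcmp => [H|H]; first by move: Hij; rewrite (src_conn Hs H) eqxx.
  right; split => //; lia.
rewrite /= ?(introF eqP Hiv) ?(introF eqP Hjv).
case: Hi => [[H E]|[H E]].
  by left; split => //; apply: flip_bwd H _; apply/eqP.
by right; split => //; apply: flip_bwd H _; apply/eqP.
Qed.

Lemma K_equiv (R : realFieldType) n (e w w' : rel 'I_n) i j o1 o2 :
  simple_graph e -> good e w' -> toric_chain R e w [set i; j] -> i != j ->
  toric_equiv o1 o2 -> (K R e w w' i j o1 <-> K R e w w' i j o2).
Proof.
move=> He Hw' Hch Hij; elim => {o1 o2}.
- move=> o1 o2 [v [Hs ->]]; split; [exact: K_fwd | exact: K_bwd].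
- by [].
- by move=> o1 o2 _ [H1 H2]; split.
- by move=> o1 o2 o3 _ [H1 H2] _ [H3 H4]; split => H; auto.
Qed.

Local Open Scope ring_scope.

Definition cyc3 (R : realFieldType) n (x : 'I_n -> R) a b c :=
  (x a < x b /\ x b < x c) \/ (x b < x c /\ x c < x a) \/ (x c < x a /\ x a < x b).

Lemma cyc3_rot (R : realFieldType) n (x : 'I_n -> R) a b c k m :
  sorted (fun u v => x u < x v) (rot k (rot m [:: a; b; c])) -> cyc3 x a b c.
Proof.
rewrite /cyc3.
have H0 : sorted (fun u v => x u < x v) [:: a; b; c] -> cyc3 x a b c.
  by rewrite /= andbT => /andP [H1 H2]; left.
have H1 : sorted (fun u v => x u < x v) [:: b; c; a] -> cyc3 x a b c.
  by rewrite /= andbT => /andP [H1 H2]; right; left.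
have H2 : sorted (fun u v => x u < x v) [:: c; a; b] -> cyc3 x a b c.
  by rewrite /= andbT => /andP [H1' H2']; right; right.
case: m => [|[|[|m]]]; case: k => [|[|[|k]]] => //=; rewrite /rot /=; auto.
Qed.

Lemma cyc3_sorted (R : realFieldType) n (x : 'I_n -> R) a b c :
  cyc3 x a b c -> exists k, sorted (fun u v => x u < x v) (rot k [:: a; b; c]).
Proof.
case=> [[H1 H2]|[[H1 H2]|[H1 H2]]].
- by exists 0%N; rewrite /= H1 H2.
- by exists 1%N; rewrite /rot /= H1 H2.
- by exists 2%N; rewrite /rot /= H1 H2.
Qed.

Lemma int01 (R : realFieldType) (d : int) :
  -1 < (d%:~R : R) -> (d%:~R : R) < 2 -> d = 0 \/ d = 1.
Proof.
rewrite -mulrN1z.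
have -> : (2 : R) = (2 : int)%:~R by [].
rewrite !ltr_int => H1 H2; lia.
Qed.

Lemma cyc_real (R : realFieldType) (xa xb xc : R) (fa fb fc : int) :
  0 <= xa < 1 -> 0 <= xb < 1 -> 0 <= xc < 1 ->
  xa + fa%:~R < xb + fb%:~R -> xb + fb%:~R < xc + fc%:~R ->
  xc + fc%:~R < xa + fa%:~R + 1 ->
  (xa < xb /\ xb < xc) \/ (xb < xc /\ xc < xa) \/ (xc < xa /\ xa < xb).
Proof.
move=> /andP [Ha0 Ha1] /andP [Hb0 Hb1] /andP [Hc0 Hc1] H1 H2 H3.
have Eb : fb = fa + (fb - fa) by ring.
have Ec : fc = fa + (fb - fa) + (fc - fb) by ring.
move: (fb - fa) (fc - fb) Eb Ec => d1 d2 Eb Ec.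
move: H1 H2 H3; rewrite Ec Eb !intrD => H1 H2 H3.
have [E1|E1] : d1 = 0 \/ d1 = 1 by apply: (int01 (R:=R)); lra.
  have [E2|E2] : d2 = 0 \/ d2 = 1 by apply: (int01 (R:=R)); lra.
    move: H1 H2 H3; rewrite E1 E2 => H1 H2 H3; lra.
  move: H1 H2 H3; rewrite E1 E2 => H1 H2 H3; lra.
have [E2|E2] : d2 = 0 \/ d2 = 1 by apply: (int01 (R:=R)); lra.
  move: H1 H2 H3; rewrite E1 E2 => H1 H2 H3; lra.
move: H1 H2 H3; rewrite E1 E2 => H1 H2 H3; lra.
Qed.

Lemma conn_mono (R : realFieldType) n (o : rel 'I_n) (y : 'I_n -> R) :
  (forall a b, o a b -> y a < y b) ->
  forall a b, connect o a b -> a != b -> y a < y b.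
Proof.
move=> Hy.
have Hle : forall a b, connect o a b -> y a <= y b.
  move=> a b /connectP [p Hp ->]; elim: p a Hp => [|c p IH] a /=.
    by move=> _; rewrite lexx.
  case/andP => Hac Hp; apply: le_trans (ltW (Hy _ _ Hac)) (IH _ Hp).
move=> a b Hab Hne; case: (conn_first Hab Hne) => c Hac Hcb.
exact: lt_le_trans (Hy _ _ Hac) (Hle _ _ Hcb).
Qed.

Local Close Scope ring_scope.


Lemma src_exists n (e : rel 'I_n) (v : 'I_n) : simple_graph e ->
  forall N o, good e o -> cnt o predT v <= N ->
  exists o', toric_equiv o o' /\ good e o' /\ is_source o' v.
Proof.
move=> He; elim=> [|N IH] o Hg Hc.
  by move: (@cnt_pos _ o predT v isT); rewrite lt0n -leqn0 Hc.
have Ha3 : acyc3 o by case: Hg => _ [].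
case: (pickP [pred u | (u != v) && connect o u v]) => [u0 Hu0|Hnone]; last first.
  exists o; split; first exact: rst_refl.
  split => // a; apply/negP => Hav.
  have Hne : a != v.
    by apply/eqP => E; move: (Ha3 _ _ Hav); rewrite E connect0.
  by move: (Hnone a); rewrite /= Hne (connect1 Hav).
case: (arg_minnP (fun u => cnt o predT u) Hu0) => u /andP [Huv Hcu] Hmin.
have Hs : is_source o u.
  move=> a; apply/negP => Hau.
  have Hav : a != v.
    by apply/eqP => E; move: (Ha3 _ _ Hau); rewrite E Hcu.
  have Hau' : a != u.
    by apply/eqP => E; move: (Ha3 _ _ Hau); rewrite E connect0.
  have := Hmin a; rewrite /= Hav (connect_trans (connect1 Hau) Hcu) => /(_ isT).
  by rewrite leqNgt (cnt_lt (P:=predT) Ha3 (connect1 Hau) Hau' isT).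
have Hg2 := good_flip He Hs Hg.
have Hlt : cnt (flip o u) predT v < cnt o predT v.
  apply: proper_card; apply/properP; split.
    apply/subsetP => w; rewrite !inE /= => Hw.
    by apply: flip_bwd Hw _; rewrite eq_sym.
  exists u; first by rewrite inE Hcu.
  rewrite inE /=; apply/negP => /flip_out E.
  by move: Huv; rewrite E eqxx.
case: (IH _ Hg2 _) => [|o' [Ho' [Hg' Hs']]].
  by rewrite -ltnS; apply: leq_trans Hlt Hc.
exists o'; split => //.
apply: (rst_trans _ _ _ _ _ _ Ho'); apply: rst_step; by exists u.
Qed.

Lemma src_exists' n (e o : rel 'I_n) (v : 'I_n) : simple_graph e -> good e o ->
  exists o', toric_equiv o o' /\ good e o' /\ is_source o' v.
Proof. by move=> He Hg; apply: (src_exists He Hg (leqnn _)). Qed.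

Local Open Scope ring_scope.

Definition v2 : 'I_3 := @Ordinal 3 1 isT.

Lemma ord3_cases (k : 'I_3) : k = v1 \/ k = v2 \/ k = v3.
Proof.
case: k => [[|[|[|m]]] Hm].
- by left; apply: val_inj.
- by right; left; apply: val_inj.
- by right; right; apply: val_inj.
- by [].
Qed.

Lemma part2a : pinterval path3_orient v1 v3 = [set: 'I_3].
Proof.
have E12 : path3_orient v1 v2 by [].
have E23 : path3_orient v2 v3 by [].
have C13 : connect path3_orient v1 v3 := connect_trans (connect1 E12) (connect1 E23).
apply/setP => k; rewrite /pinterval /ple !inE.
case: (ord3_cases k) => [->|[->|->]].
- by rewrite connect0 C13.
- by rewrite (connect1 E12) (connect1 E23).
- by rewrite connect0 C13.
Qed.

Lemma part2b (R : realFieldType) (I : {set 'I_3}) :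
  is_tor_interval R path3 path3_orient v1 v3 I -> I = set0.
Proof.
move=> HI.
pose x := fun a : 'I_3 => if a == v2 then (2%:R)^-1 else (0 : R).
have Hx1 : x v1 = 0 by [].
have Hx2 : x v2 = (2%:R)^-1 by rewrite /x eqxx.
have Hx3 : x v3 = 0 by [].
have H1 : (0 : R) < (2%:R)^-1 by lra.
have H2 : (2%:R)^-1 < (1 : R) by lra.
have Hch : in_chamber path3 path3_orient x.
  split; [|split].
  - move=> a; case: (ord3_cases a) => [->|[->|->]]; rewrite ?Hx1 ?Hx2 ?Hx3 ?lexx ?ltr01 //.
    by rewrite ltW.
  - move=> a b; case: (ord3_cases a) => [->|[->|->]]; case: (ord3_cases b) => [->|[->|->]];
      rewrite ?Hx1 ?Hx2 ?Hx3 //; by rewrite ?(gt_eqF H1) ?(lt_eqF H1).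
  - have Hs1 : is_source path3_orient v1.
      by move=> a; case: (ord3_cases a) => [->|[->|->]].
    have Hs2 : is_source (flip path3_orient v1) v2.
      by move=> a; case: (ord3_cases a) => [->|[->|->]].
    have -> : induced_orient path3 x = flip (flip path3_orient v1) v2.
      apply: functional_extensionality => a; apply: functional_extensionality => b.
      case: (ord3_cases a) => [->|[->|->]]; case: (ord3_cases b) => [->|[->|->]];
        rewrite /induced_orient ?Hx1 ?Hx2 ?Hx3 ?ltxx ?H1 ?(lt_gtF H1) ?andbF //=.
    rewrite /toric_equiv; apply: (rst_trans _ _ _ (flip path3_orient v1)); apply: rst_step.
      by exists v1.
    by exists v2.
apply/setP => k; rewrite inE; apply/negP => /HI.
rewrite /tor_mem /= => [[Htc _]].
by apply: (no_tie Htc _ Hch).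
Qed.


Lemma part1 (R : realFieldType) n (e o : rel 'I_n) (i j : 'I_n) (I : {set 'I_n}) :
  simple_graph e -> acyc_orient e o -> is_tor_interval R e o i j I ->
  exists o', toric_equiv o o' /\ I = pinterval o' i j.
Proof.
move=> He Hg HI.
have Ha3 : acyc3 o by case: Hg => _ [].
case: (i =P j) => [Eij|Hij].
  subst j; exists o; split; first exact: rst_refl.
  apply/setP => k; rewrite /pinterval /ple inE.
  have := HI k; rewrite /tor_mem eqxx => HIk.
  apply/idP/idP.
    by move/HIk => ->; rewrite connect0.
  by case/andP => H1 H2; apply/HIk; apply: acyc_antisym Ha3 H2 H1.
have Hij' : i != j by apply/eqP.
case: (classic (toric_chain R e o [set i; j])) => Hch; last first.
  case: (src_exists' j He Hg) => o' [Ho' [Hg' Hs']].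
  exists o'; split => //; apply/setP => k; rewrite /pinterval /ple inE.
  apply/idP/idP.
    by move/HI; rewrite /tor_mem (negbTE Hij') => [[]].
  case/andP => H1 H2; move: Hij'; rewrite (src_conn Hs' (connect_trans H1 H2)) eqxx.
  done.
case: (src_exists' i He Hg) => o' [Ho' [Hg' Hs']].
have Ha3' : acyc3 o' by case: Hg' => _ [].
have Hcij : connect o' i j.
  case/orP: (cmp_lem He Hg' Ho' Hch Hij') => // H.
  by move: Hij'; rewrite (src_conn Hs' H) eqxx.
exists o'; split => //; apply/setP => k; rewrite /pinterval /ple inE.
have HIk := HI k; rewrite /tor_mem (negbTE Hij') in HIk.
apply/idP/idP.
- move/HIk => [_ [->|[->|[s [[Hu [Hset Hsort]] [m Es]]]]]].
  + by rewrite connect0 Hcij.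
  + by rewrite Hcij connect0.
  + have Hu' : uniq [:: i; k; j] by rewrite -(rot_uniq m) -Es.
    move: Hu'; rewrite /= !inE !negb_or => /andP [/andP [Hik Hij2] /andP [Hkj _]].
    apply/negPn/negP => Hnot.
    have Hcyc : forall x : 'I_n -> R, in_chamber e o x -> cyc3 x i k j.
      move=> x Hx; case: (Hsort x Hx) => m' Hm'; rewrite Es in Hm'; exact: cyc3_rot Hm'.
    case Hik': (connect o' i k).
      have Hkj' : ~~ connect o' k j by move: Hnot; rewrite Hik'.
      case: (ord_pot Ha3' Hcij Hij' Hkj') => g [Hinc [Hbd [Hgij Hgjk]]].
      have Hx := pot_chamber R He Hg' Ho' Hinc Hbd.
      move: (Hcyc _ Hx); rewrite /cyc3 !divM_lt //.
      case=> [[Ha Hb]|[[Ha Hb]|[Ha Hb]]]; lia.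
    have Hki : ~~ connect o' k i.
      by apply/negP => /(src_conn Hs') E; move: Hik; rewrite E eqxx.
    case: (tie_pot Ha3' Hik (negbT Hik') Hki) => g [Hinc [Hbd Eg]].
    have Hx := pot_chamber R He Hg' Ho' Hinc Hbd.
    move: (Hcyc _ Hx); rewrite /cyc3 !divM_lt //.
    case=> [[Ha Hb]|[[Ha Hb]|[Ha Hb]]]; lia.
- move=> /andP [Hik Hkj]; apply/HIk; split => //.
  case: (k =P i) => [->|Hki]; first by left.
  case: (k =P j) => [->|Hkj2]; first by right; left.
  right; right; exists [:: i; k; j]; split; last by exists 0%N; rewrite rot0.
  split.
    rewrite /= !inE !negb_or Hij' andbT.
    by rewrite eq_sym (introF eqP Hki) (introF eqP Hkj2).
  split.
    by apply/setP => v; rewrite !inE; case: (v == i); case: (v == j); case: (v == k).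
  move=> x [H0 [Hedge Heq]]; apply: cyc3_sorted.
  have HK : K R e o o' i j o'.
    split => //; split => //; exists (fun _ => 0%R); split.
      by move=> a b H; left.
    by left.
  have Hox : toric_equiv o' (induced_orient e x).
    exact: rst_trans _ _ _ _ _ (rst_sym _ _ _ _ Ho') Heq.
  case: (proj1 (K_equiv He Hg' Hch Hij' Hox) HK) => Hgx [_ [f [Hc Hinv]]].
  pose y := fun v => x v + (f v)%:~R.
  have Hy : forall a b, o' a b -> y a < y b.
    move=> a b Hab; rewrite /y; case: (Hc _ _ Hab) => [[Hoab E]|[Hoba E]].
      by rewrite E ltrD2r; case/andP: Hoab.
    rewrite E intrD mulr1z; case/andP: Hoba => _ Hxba.
    move: (H0 a) (H0 b) => /andP [? ?] /andP [? ?]; lra.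
  have Hyx : forall a b, induced_orient e x a b -> x a < x b by move=> a b /andP [].
  have Hki' : i != k by rewrite eq_sym; apply/eqP.
  have Hyik := conn_mono Hy Hik Hki'.
  have Hykj := conn_mono Hy Hkj (introN eqP Hkj2).
  have Hyji : y j < y i + 1.
    move: (H0 i) (H0 j) => /andP [? ?] /andP [? ?].
    case: Hinv => [[Hc' E]|[Hc' E]].
      have := conn_mono Hyx Hc' Hij'; rewrite /y E => ?; lra.
    have := conn_mono Hyx Hc' (negbT (introF eqP (nesym Hij))).
    rewrite /y E intrD mulr1z => ?; lra.
  exact: (cyc_real (H0 i) (H0 k) (H0 j) Hyik Hykj Hyji).
Qed.

Local Close Scope ring_scope.

Theorem mainTheorem7 (R : realFieldType) :
  (forall (n : nat) (e o : rel 'I_n) (i j : 'I_n) (I : {set 'I_n}),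
     simple_graph e -> acyc_orient e o ->
     is_tor_interval R e o i j I ->
     exists o' : rel 'I_n, toric_equiv o o' /\ I = pinterval o' i j)
  /\
  (pinterval path3_orient v1 v3 = [set: 'I_3] /\
   forall I : {set 'I_3}, is_tor_interval R path3 path3_orient v1 v3 I ->
     I = set0).
Proof.
split; first by move=> n e o i j I; apply: part1.
split; first exact: part2a.
exact: part2b.
Qed.
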